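(* Let $X$ be a finite simplicial complex with vertices labelled by $\{1,\dots,n\}$, let $d\ge0$, and let $\sigma$ be a symmetry of $X$. Suppose $F^{\uparrow}:C_{d+1}(X)\to C_{d+1}(X)$ is componentwise with every component given by the same odd function $\mathbb{R}\to\mathbb{R}$, and $F^{\downarrow}:C_{d-1}(X)\to C_{d-1}(X)$ is componentwise with every component given by the same odd function $\mathbb{R}\to\mathbb{R}$. Let $G^{\uparrow}=B_{d+1}F^{\uparrow}B_{d+1}^\intercal$ and $G^{\downarrow}=B_d^\intercal F^{\downarrow}B_d$, as maps $C_d(X)\to C_d(X)$. Then $$G^{\uparrow}\circ S^d_\sigma=S^d_\sigma\circ G^{\uparrow}\quad\text{and}\quad G^{\downarrow}\circ S^d_\sigma=S^d_\sigma\circ G^{\downarrow}.$$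
   Context: A finite simplicial complex $X$ on vertex set $\{1,\dots,n\}$ is a collection of nonempty subsets closed under taking nonempty subsets; $X_d$ is the set of simplices with $d+1$ vertices; a $d$-simplex with vertices $i_0<\dots<i_d$ is written $[i_0,\dots,i_d]$ and $A_s=\{i_0,\dots,i_d\}$. $C_d(X)$ is the real vector space with basis $X_d$ and inner product making $X_d$ orthonormal ($C_{-1}(X)=0$, $B_0=0$). The boundary map is $\partial_d[i_0,\dots,i_d]=\sum_{k=0}^d(-1)^k[i_0,\dots,\widehat{i_k},\dots,i_d]$ with matrix $B_d$ in the bases $X_d,X_{d-1}$. A symmetry of $X$ is a permutation $\sigma$ of $\{1,\dots,n\}$ such that for every simplex $s$ the set $\sigma(A_s)$ is again a simplex, denoted $\sigma(s)$. For $A=\{i_0<\dots<i_d\}$, $\operatorname{sgn}(A,\sigma)=\operatorname{sgn}(\tau)$ where $\tau$ is the unique permutation of $\{0,\dots,d\}$ with $\sigma(i_{\tau(0)})<\dots<\sigma(i_{\tau(d)})$. $S^d_\sigma:C_d(X)\to C_d(X)$ is the linear map with $S^d_\sigma(s)=\operatorname{sgn}(A_s,\sigma)\,\sigma(s)$ for $s\in X_d$. A map $F:C_D(X)\to C_D(X)$ is componentwise if $(F(x))_s$ depends only on $x_s$, i.e. $(F(x))_s=F_s(x_s)$. *)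

(* Defs.v *)
From HB Require Import structures.
From mathcomp Require Import all_boot all_order all_algebra all_fingroup.
From mathcomp Require Import reals.
Set Implicit Arguments. Unset Strict Implicit. Unset Printing Implicit Defensive.
Import Order.TTheory GRing.Theory Num.Theory.
Local Open Scope ring_scope.

(* Vertices are 'I_n = {0,...,n-1} (order-preserving relabelling of {1,...,n}).
   A simplex is a (nonempty) finite set of vertices; a complex is a set of simplices. *)
Definition simplicial_complex (n : nat) (X : {set {set 'I_n}}) : Prop :=
  (forall s, s \in X -> s != set0) /\
  (forall s t : {set 'I_n}, s \in X -> t \subset s -> t != set0 -> t \in X).

(* Simplices with exactly k vertices: X_d = simplices X d.+1. *)
Definition simplices (n : nat) (X : {set {set 'I_n}}) (k : nat) : {set {set 'I_n}} :=
  [set s in X | #|s| == k].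

(* Chains: real coefficients indexed by vertex sets; the chain space C_d(X)
   consists of those supported on X_d. *)
Definition chain (R : realType) (n : nat) := {ffun {set 'I_n} -> R}.

Definition in_chains (R : realType) n (X : {set {set 'I_n}}) (k : nat) (x : chain R n) : Prop :=
  forall s, s \notin simplices X k -> x s = 0.

(* Coefficient of face t in the boundary of simplex s = [i_0 < ... < i_d]:
   removing v = i_j contributes (-1)^j, j = #{u in s | u < v}. *)
Definition incidence (R : realType) n (t s : {set 'I_n}) : R :=
  \sum_(v in s) (t == s :\ v)%:R * (-1) ^+ #|[set u in s | (u < v)%N]|.

(* Matrix entry B(t, s) of the boundary map from simplices with k vertices
   to simplices with k-1 vertices (for k = 1 the target is empty: B_0 = 0). *)
Definition bmat (R : realType) n (X : {set {set 'I_n}}) (k : nat) (t s : {set 'I_n}) : R :=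
  if (s \in simplices X k) && (t \in simplices X k.-1) then incidence R t s else 0.

Definition bnd (R : realType) n (X : {set {set 'I_n}}) (k : nat) (y : chain R n) : chain R n :=
  [ffun t => \sum_s bmat R X k t s * y s].
Definition bndT (R : realType) n (X : {set {set 'I_n}}) (k : nat) (x : chain R n) : chain R n :=
  [ffun s => \sum_t bmat R X k t s * x t].

Definition compw (R : realType) n (f : R -> R) (x : chain R n) : chain R n :=
  [ffun s => f (x s)].

Definition odd_fun (R : realType) (f : R -> R) : Prop := forall r, f (- r) = - f r.

Definition symmetry n (X : {set {set 'I_n}}) (sigma : {perm 'I_n}) : Prop :=
  forall s, s \in X -> sigma @: s \in X.

(* sgn(A, sigma) = sign of the permutation tau sorting sigma(A); computed as
   (-1)^(number of inversions of tau) = (-1)^#{(i,j) in A^2 | i < j, sigma i > sigma j}. *)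
Definition sgnA (R : realType) n (A : {set 'I_n}) (sigma : {perm 'I_n}) : R :=
  (-1) ^+ #|[set p : 'I_n * 'I_n | [&& p.1 \in A, p.2 \in A, (p.1 < p.2)%N & (sigma p.2 < sigma p.1)%N]]|.

(* S^d_sigma : s |-> sgn(A_s, sigma) sigma(s), for s in X_d (k = d+1 vertices). *)
Definition Ssig (R : realType) n (X : {set {set 'I_n}}) (k : nat) (sigma : {perm 'I_n})
  (x : chain R n) : chain R n :=
  [ffun t => \sum_(s in simplices X k) (sigma @: s == t)%:R * sgnA R s sigma * x s].

(* G_up = B_{d+1} F_up B_{d+1}^T,  G_down = B_d^T F_down B_d, on C_d. *)
Definition Gup (R : realType) n (X : {set {set 'I_n}}) (d : nat) (f : R -> R) (x : chain R n) :=
  bnd X d.+2 (compw f (bndT X d.+2 x)).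
Definition Gdown (R : realType) n (X : {set {set 'I_n}}) (d : nat) (g : R -> R) (x : chain R n) :=
  bndT X d.+1 (compw g (bnd X d.+1 x)).

(* Main.v *)
Require Import Defs.
From mathcomp Require Import all_boot all_order all_algebra all_fingroup.
From mathcomp Require Import reals.
Set Implicit Arguments. Unset Strict Implicit. Unset Printing Implicit Defensive.
From mathcomp Require Import zify ring lra.
Import Order.TTheory GRing.Theory Num.Theory.
Local Open Scope ring_scope.

Section Aux.
Variables (R : realType) (n : nat) (sigma : {perm 'I_n}).

Lemma imK (t : {set 'I_n}) : sigma @: (sigma^-1%g @: t) = t.
Proof. by rewrite -imset_comp (eq_imset _ (permKV sigma)) imset_id. Qed.

Lemma imKV (t : {set 'I_n}) : sigma^-1%g @: (sigma @: t) = t.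
Proof. by rewrite -imset_comp (eq_imset _ (permK sigma)) imset_id. Qed.

Lemma im_inj : injective (fun s : {set 'I_n} => sigma @: s).
Proof. exact: imset_inj (@perm_inj _ sigma). Qed.

Lemma card_im (s : {set 'I_n}) : #|sigma @: s| = #|s|.
Proof. exact: card_imset (@perm_inj _ sigma). Qed.

Lemma sign_sq (m : nat) : ((-1) ^+ m * (-1) ^+ m : R) = 1.
Proof. by rewrite -exprD addnn -mul2n exprM expr2 mulN1r opprK expr1n. Qed.

Lemma sgn_sq (s : {set 'I_n}) : sgnA R s sigma * sgnA R s sigma = 1.
Proof. exact: sign_sq. Qed.

Lemma imset_pair2 (v : 'I_n) (C : {set 'I_n}) :
  [set p : 'I_n * 'I_n | (p.2 == v) && (p.1 \in C)] = (fun u => (u, v)) @: C.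
Proof.
apply/setP => -[a b]; rewrite inE /=; apply/andP/imsetP.
  by move=> [/eqP -> aC]; exists a.
by move=> [u uC [-> ->]]; split.
Qed.

Lemma imset_pair1 (v : 'I_n) (C : {set 'I_n}) :
  [set p : 'I_n * 'I_n | (p.1 == v) && (p.2 \in C)] = (fun u => (v, u)) @: C.
Proof.
apply/setP => -[a b]; rewrite inE /=; apply/andP/imsetP.
  by move=> [/eqP -> aC]; exists b.
by move=> [u uC [-> ->]]; split.
Qed.

Lemma sgn_lemma (s : {set 'I_n}) (v : 'I_n) : v \in s ->
  (-1) ^+ #|[set u in s | (sigma u < sigma v)%N]| * sgnA R s sigma =
  sgnA R (s :\ v) sigma * (-1) ^+ #|[set u in s | (u < v)%N]|.
Proof.
move=> vs.
set A := [set u in s | _]; set B := [set u in s | _].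
set L := [set u : 'I_n | (u < v)%N]; set M := [set u : 'I_n | (sigma u < sigma v)%N].
have eA := cardsID L A; have eB := cardsID M B.
have AB : A :&: L = B :&: M.
  by apply/setP => u; rewrite !inE; case: (u \in s); case: (_ < _)%N; case: (_ < _)%N.
rewrite /sgnA.
set P := [set p : 'I_n * 'I_n | _].
set P' := [set p : 'I_n * 'I_n | _].
set Q2 := [set p : 'I_n * 'I_n | p.2 == v].
set Q1 := [set p : 'I_n * 'I_n | p.1 == v].
have e1 := cardsID Q2 P; have e2 := cardsID Q1 (P :\: Q2).
have h1 : P :&: Q2 = [set p : 'I_n * 'I_n | (p.2 == v) && (p.1 \in B :\: M)].
  apply/setP => -[a b]; rewrite !inE /=.
  case: (eqVneq b v) => [->|]; last by rewrite !andbF.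
  rewrite vs /= andbT.
  case: (eqVneq a v) => [->|av]; first by rewrite ltnn !andbF.
  have ne : (nat_of_ord (sigma v) != nat_of_ord (sigma a)).
    by rewrite val_eqE (inj_eq perm_inj) eq_sym.
  have -> : (sigma v < sigma a)%N = ~~ (sigma a < sigma v)%N.
    by rewrite -leqNgt ltn_neqAle ne.
  by case: (a \in s); case: (a < v)%N; case: (sigma a < sigma v)%N.
have h2 : (P :\: Q2) :&: Q1 = [set p : 'I_n * 'I_n | (p.1 == v) && (p.2 \in A :\: L)].
  apply/setP => -[a b]; rewrite !inE /=.
  case: (eqVneq a v) => [->|]; last by rewrite /= ?andbF.
  rewrite vs /= ?andbT.
  case: (eqVneq b v) => [->|bv]; first by rewrite !ltnn /= ?andbF.
  have ne : (nat_of_ord v != nat_of_ord b) by rewrite val_eqE eq_sym.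
  have -> : (v < b)%N = ~~ (b < v)%N by rewrite -leqNgt ltn_neqAle ne.
  by case: (b \in s); case: (b < v)%N; case: (sigma b < sigma v)%N.
have h3 : (P :\: Q2) :\: Q1 = P'.
  apply/setP => -[a b]; rewrite !inE /=.
  by case: (a == v); case: (b == v); rewrite ?andbF.
rewrite h3 in e2; rewrite h1 imset_pair2 card_imset in e1; last by move=> x y [].
rewrite h2 imset_pair1 card_imset in e2; last by move=> x y [].
rewrite -e1 -e2 -eA -eB AB.
set a1 := #|B :&: M|; set a2 := #|A :\: L|; set b2 := #|B :\: M|; set I := #|P'|.
rewrite -!exprD.
have -> : (a1 + a2 + (b2 + (a2 + I)) = (I + (a1 + b2)) + 2 * a2)%N.
  by lia.
by rewrite exprD exprM expr2 mulN1r opprK expr1n mulr1.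
Qed.

Lemma inc_sig (t s : {set 'I_n}) :
  incidence R (sigma @: t) (sigma @: s) * sgnA R s sigma =
  sgnA R t sigma * incidence R t s.
Proof.
rewrite /incidence big_imset /=; last by move=> x y _ _; apply: perm_inj.
rewrite mulr_suml mulr_sumr; apply: eq_bigr => v vs.
have -> : sigma @: s :\ sigma v = sigma @: (s :\ v).
  apply/setP => u; rewrite -[u](permKV sigma) !inE (inj_eq perm_inj).
  by rewrite !mem_imset ?inE //; apply: perm_inj.
rewrite (inj_eq im_inj); case: eqP => [->|_]; last by rewrite !mul0r mulr0.
rewrite !mul1r.
have -> : [set u in sigma @: s | (u < sigma v)%N] =
          sigma @: [set u in s | (sigma u < sigma v)%N].
  apply/setP => u; rewrite -[u](permKV sigma) inE.
  by rewrite !mem_imset ?inE //; apply: perm_inj.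
rewrite card_im; exact: sgn_lemma.
Qed.

End Aux.

Section Main.
Variables (R : realType) (n : nat) (X : {set {set 'I_n}}) (sigma : {perm 'I_n}).

Lemma symX (Hs : symmetry X sigma) (s : {set 'I_n}) : (sigma @: s \in X) = (s \in X).
Proof.
apply/idP/idP; last exact: Hs.
set Y := (fun s' : {set 'I_n} => sigma @: s') @: X.
have YX : Y \subset X by apply/subsetP => _ /imsetP[s' Hs' ->]; exact: Hs.
have cY : #|Y| = #|X| by rewrite card_imset //; exact: im_inj.
have eY : Y = X by apply/eqP; rewrite eqEcard YX cY leqnn.
move=> H; have : sigma @: s \in Y by rewrite eY.
by case/imsetP => s' Hs' /im_inj ->.
Qed.

Lemma symXk (Hs : symmetry X sigma) k (s : {set 'I_n}) :
  (sigma @: s \in simplices X k) = (s \in simplices X k).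
Proof. by rewrite !inE symX // card_im. Qed.

Lemma SsigE k (x : chain R n) (t : {set 'I_n}) : Ssig X k sigma x t =
  (sigma^-1%g @: t \in simplices X k)%:R * sgnA R (sigma^-1%g @: t) sigma * x (sigma^-1%g @: t).
Proof.
rewrite ffunE.
have eq (s : {set 'I_n}) : (sigma @: s == t) = (s == sigma^-1%g @: t).
  by apply/eqP/eqP => [<-|->]; rewrite ?imKV ?imK.
under eq_bigr => s _ do rewrite eq.
case: (boolP (sigma^-1%g @: t \in simplices X k)) => H.
  rewrite (bigD1 (sigma^-1%g @: t)) //= eqxx big1 ?addr0 // => s /andP[_ /negbTE ->].
  by rewrite !mul0r.
rewrite big1 ?mul0r // => s sX.
have /negbTE -> : s != sigma^-1%g @: t by apply: contraNneq H => <-.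
by rewrite !mul0r.
Qed.

Lemma bmat_sig (Hs : symmetry X sigma) k (t s : {set 'I_n}) :
  bmat R X k (sigma @: t) (sigma @: s) = sgnA R t sigma * bmat R X k t s * sgnA R s sigma.
Proof.
rewrite /bmat !symXk //; case: ifP => _; last by rewrite mulr0 mul0r.
by rewrite -inc_sig -mulrA sgn_sq mulr1.
Qed.

Lemma aux1 (m : nat) (a b c : R) : let e := (-1) ^+ m in a * b * e * (e * c) = a * (b * c).
Proof. by rewrite /= -signr_odd; case: odd => /=; ring. Qed.

Lemma aux2 (m : nat) (f b c : R) : let e := (-1) ^+ m in e * b * f * (e * c) = f * (b * c).
Proof. by rewrite /= -signr_odd; case: odd => /=; ring. Qed.

Lemma bnd_sig (Hs : symmetry X sigma) k (y : chain R n) :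
  bnd X k (Ssig X k sigma y) = Ssig X k.-1 sigma (bnd X k y).
Proof.
apply/ffunP => t; rewrite -(imK sigma t); move: (sigma^-1%g @: t) => t0.
rewrite SsigE imKV !ffunE (reindex_inj (@im_inj n sigma)) /= mulr_sumr.
apply: eq_bigr => s _; rewrite SsigE imKV bmat_sig //.
rewrite /bmat; case: (boolP (s \in simplices X k)) => Hs';
  case: (boolP (t0 \in simplices X k.-1)) => Ht /=;
  rewrite ?mul0r ?mulr0 ?mul1r //.
exact: aux1. by rewrite !mul0r.
Qed.

Lemma bndT_sig (Hs : symmetry X sigma) k (x : chain R n) :
  bndT X k (Ssig X k.-1 sigma x) = Ssig X k sigma (bndT X k x).
Proof.
apply/ffunP => t; rewrite -(imK sigma t); move: (sigma^-1%g @: t) => s0.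
rewrite SsigE imKV !ffunE (reindex_inj (@im_inj n sigma)) /= mulr_sumr.
apply: eq_bigr => s _; rewrite SsigE imKV bmat_sig //.
rewrite /bmat; case: (boolP (s0 \in simplices X k)) => Hs';
  case: (boolP (s \in simplices X k.-1)) => Ht /=;
  rewrite ?mul0r ?mulr0 ?mul1r //.
exact: aux2. by rewrite !mul0r.
Qed.

Lemma compw_sig (f : R -> R) (Hf : odd_fun f) k (x : chain R n) :
  compw f (Ssig X k sigma x) = Ssig X k sigma (compw f x).
Proof.
apply/ffunP => t; rewrite [LHS]ffunE !SsigE ffunE.
case: (_ \in _) => /=; rewrite ?mul1r ?mul0r.
  rewrite /sgnA -signr_odd; case: odd => /=; rewrite ?mul1r ?expr1 ?mulN1r ?Hf //.
have := Hf 0; rewrite oppr0 => h; lra.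
Qed.

End Main.

Theorem mainTheorem3 (R : realType) (n : nat) (X : {set {set 'I_n}})
  (HX : simplicial_complex X) (d : nat) (sigma : {perm 'I_n})
  (Hsigma : symmetry X sigma) (f g : R -> R)
  (Hf : odd_fun f) (Hg : odd_fun g) :
  (forall x : chain R n, in_chains X d.+1 x ->
     Gup X d f (Ssig X d.+1 sigma x) = Ssig X d.+1 sigma (Gup X d f x)) /\
  (forall x : chain R n, in_chains X d.+1 x ->
     Gdown X d g (Ssig X d.+1 sigma x) = Ssig X d.+1 sigma (Gdown X d g x)).
Proof.
split => x _.
  by rewrite /Gup bndT_sig // compw_sig // bnd_sig.
by rewrite /Gdown bnd_sig // compw_sig // bndT_sig.
Qed.
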